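(* Let $M'=M[D,K]$ be a compatible minor of the weighted uncertainty matroid $\mathcal{M}$. If there is a basis $B$ of $M'$ and an element $e\in B$ that has the unique minimum weight in $E(M')\setminus\mathrm{span}_{M'}(B\setminus\{e\})$, then $M[D,K\cup\{e\}]$ is a compatible minor of $\mathcal{M}$.
   Context: A weighted uncertainty matroid $\mathcal{M}=(E,\mathcal{I},A,w)$ consists of a matroid $M=(E,\mathcal{I})$ on a finite set $E$, for each $e\in E$ a non-empty finite union $A_e$ of bounded real intervals (each open or closed), a weight $w_e\in A_e$, and a query cost $c_e\ge0$. A minimum-weight basis (MWB) is a basis minimizing total weight. A weight assignment is $w^*$ with $w^*_e\in A_e$, consistent with $Q$ if $w^*_e=w_e$ on $Q$. $Q$ verifies an MWB $B$ if for every weight assignment consistent with $Q$, $B$ is an MWB with respect to it; a certificate for $\mathcal{M}$ is a set verifying some MWB, and $c^*$ denotes the minimum cost $\sum_{e\in Q}c_e$ of a certificate for $\mathcal{M}$. For $D,K\subseteq E$, $M[D,K]$ is the matroid obtained from $M$ by deleting $D$ and contracting $K$, with ground set $E(M[D,K])=E\setminus(D\cup K)$ and weights restricted. $M[D,K]$ is a compatible minor of $\mathcal{M}$ if there is a set $Q$ of cost $c^*$ that verifies an MWB $B$ of $\mathcal{M}$ with $K\subseteq B$ and $D\cap B=\emptyset$. For a matroid $N$ with rank function $r$, $\mathrm{span}_N(X)=\{e: r(X\cup\{e\})=r(X)\}$. *)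

(* Defs.v *)
From HB Require Import structures.
From mathcomp Require Import all_boot all_order all_algebra.
From mathcomp Require Import reals.
Set Implicit Arguments. Unset Strict Implicit. Unset Printing Implicit Defensive.
Import Order.TTheory GRing.Theory Num.Theory.
Local Open Scope ring_scope.

Record matroid (E : finType) := Matroid {
  indep : pred {set E};
  indep0 : indep set0;
  indep_sub : forall X Y : {set E}, indep Y -> X \subset Y -> indep X;
  indep_aug : forall X Y : {set E}, indep X -> indep Y -> (#|X| < #|Y|)%N ->
              exists2 e, e \in Y :\: X & indep (e |: X)
}.

Definition rank_of (E : finType) (I : pred {set E}) (X : {set E}) : nat :=
  \max_(Y : {set E} | (Y \subset X) && I Y) #|Y|.

Definition rank (E : finType) (M : matroid E) (X : {set E}) : nat :=
  rank_of (indep M) X.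

Definition is_basis (E : finType) (M : matroid E) (B : {set E}) : bool :=
  indep M B && [forall e, (e \notin B) ==> ~~ indep M (e |: B)].

Definition minor_ground (E : finType) (D K : {set E}) : {set E} := ~: (D :|: K).

Definition minor_indep (E : finType) (M : matroid E) (D K : {set E})
  (Y : {set E}) : bool :=
  (Y \subset minor_ground D K) && (rank M (Y :|: K) == #|Y| + rank M K)%N.

Definition minor_rank (E : finType) (M : matroid E) (D K : {set E})
  (X : {set E}) : nat := rank_of (minor_indep M D K) X.

Definition minor_is_basis (E : finType) (M : matroid E) (D K B : {set E}) : bool :=
  minor_indep M D K B &&
  [forall e in minor_ground D K, (e \notin B) ==> ~~ minor_indep M D K (e |: B)].

Definition minor_span (E : finType) (M : matroid E) (D K X : {set E}) : {set E} :=
  [set e in minor_ground D K |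
     minor_rank M D K (e |: X) == minor_rank M D K X].

Record ival (R : realType) := Ival { ilo : R; ihi : R; iclosed : bool }.

Definition in_ival (R : realType) (I : ival R) (x : R) : bool :=
  if iclosed I then (ilo I <= x) && (x <= ihi I) else (ilo I < x) && (x < ihi I).

Definition in_area (R : realType) (A : seq (ival R)) (x : R) : bool :=
  has (fun I => in_ival I x) A.

Record wu_matroid (R : realType) (E : finType) := WUMatroid {
  mat : matroid E;
  area : E -> seq (ival R);
  wt : E -> R;
  cost : E -> R;
  area_ne : forall e, (0 < size (area e))%N;
  wt_in : forall e, in_area (area e) (wt e);
  cost_ge0 : forall e, 0 <= cost e
}.

Section WU.
Variables (R : realType) (E : finType) (MM : wu_matroid R E).

Definition basis_weight (w' : E -> R) (B : {set E}) : R := \sum_(e in B) w' e.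

Definition is_MWB (w' : E -> R) (B : {set E}) : Prop :=
  is_basis (mat MM) B /\
  forall B', is_basis (mat MM) B' -> basis_weight w' B <= basis_weight w' B'.

Definition weight_assignment (w' : E -> R) : Prop :=
  forall e, in_area (area MM e) (w' e).

Definition consistent (Q : {set E}) (w' : E -> R) : Prop :=
  weight_assignment w' /\ forall e, e \in Q -> w' e = wt MM e.

Definition verifies (Q B : {set E}) : Prop :=
  forall w', consistent Q w' -> is_MWB w' B.

Definition certificate (Q : {set E}) : Prop := exists B, verifies Q B.

Definition query_cost (Q : {set E}) : R := \sum_(e in Q) cost MM e.

(* Q has cost c^* = minimum cost of a certificate (Q itself being a certificate) *)
Definition optimal_cost (Q : {set E}) : Prop :=
  forall Q', certificate Q' -> query_cost Q <= query_cost Q'.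

Definition compatible_minor (D K : {set E}) : Prop :=
  exists Q B, [/\ optimal_cost Q, verifies Q B, K \subset B & [disjoint D & B]].

End WU.

(* Main.v *)
Require Import Defs.
From HB Require Import structures.
From mathcomp Require Import all_boot all_order all_algebra.
From mathcomp Require Import reals.
From mathcomp Require Import zify lra.
Import Order.TTheory GRing.Theory Num.Theory.
Local Open Scope ring_scope.

Section Aux.
Variables (E : finType) (M : matroid E).

Lemma exists_maxcard (P : pred {set E}) X0 : P X0 ->
  exists W, P W /\ forall W', P W' -> (#|W'| <= #|W|)%N.
Proof.
move=> PX0; have [W PW Wmax] := arg_maxnP (fun W : {set E} => #|W|) PX0.
by exists W; split => // W' /Wmax.
Qed.

Lemma rank_indep X : indep M X -> rank M X = #|X|.
Proof.
rewrite /rank /rank_of => IX; apply/eqP; rewrite eqn_leq; apply/andP; split.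
- by apply/bigmax_leqP => Y /andP[sYX _]; exact: subset_leq_card.
- by apply: (leq_bigmax_cond (F := fun Y : {set E} => #|Y|)); rewrite subxx IX.
Qed.

Lemma rank_card_indep X : rank M X = #|X| -> indep M X.
Proof.
rewrite /rank /rank_of => H; apply/negPn/negP => nIX.
have X0: X != set0 by apply: contra nIX => /eqP->; exact: indep0.
have : (\max_(Y : {set E} | (Y \subset X) && indep M Y) #|Y| <= #|X|.-1)%N.
  apply/bigmax_leqP => Y /andP[sYX IY].
  have : Y \proper X.
    by rewrite properEneq sYX andbT; apply: contraNneq nIX => <-.
  move/proper_card; move: X0; rewrite -card_gt0; lia.
rewrite H; move: X0; rewrite -card_gt0; lia.
Qed.

Lemma closure_step T X e : indep M T -> indep M (e |: T) -> e \notin T ->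
  indep M X ->
  (forall x, x \in X -> (x \in T) || ~~ indep M (x |: T)) -> indep M (e |: X).
Proof.
move=> IT IeT eT IX HX.
pose P := fun W => [&& indep M W, X \subset W & W \subset X :|: T].
have PX : P X by rewrite /P IX subxx subsetUl.
have [W [/and3P[IW sXW sWXT] Wmax]] := @exists_maxcard P X PX.
have cW : (#|W| <= #|T|)%N.
  rewrite leqNgt; apply/negP => lt.
  have [w /setDP[wW wT] IwT] := indep_aug IT IW lt.
  have := subsetP sWXT w wW; rewrite in_setU (negbTE wT) orbF => wX.
  by move: (HX w wX); rewrite (negbTE wT) IwT.
have ltW : (#|W| < #|e |: T|)%N by rewrite cardsU1 eT add1n ltnS.
have [y /setDP[yeT yW] IyW] := indep_aug IW IeT ltW.
move: yeT; rewrite in_setU1 => /orP[/eqP ye | yT].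
  by subst y; apply: indep_sub IyW _; rewrite setUS.
have : P (y |: W).
  rewrite /P IyW (subset_trans sXW (subsetUr _ _)) subUset sub1set in_setU yT orbT.
  by rewrite sWXT.
by move/Wmax; rewrite cardsU1 yW add1n ltnn.
Qed.

End Aux.
Arguments rank_indep {E M X}.
Arguments rank_card_indep {E M X}.
Arguments closure_step {E M T X e}.
Arguments exists_maxcard {E}.

Theorem mainTheorem10 (R : realType) (E : finType) (MM : wu_matroid R E)
  (D K B : {set E}) (e : E) :
  compatible_minor MM D K ->
  minor_is_basis (mat MM) D K B ->
  e \in B ->
  e \in minor_ground D K :\: minor_span (mat MM) D K (B :\ e) ->
  (forall f, f \in minor_ground D K :\: minor_span (mat MM) D K (B :\ e) ->
     f != e -> wt MM e < wt MM f) ->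
  compatible_minor MM D (e |: K).
Proof.
move=> [Q [B0 [Hopt Hver HKB0 HDB0]]] HB HeB HeGS Hmin.
exists Q, B0; split=> //.
rewrite subUset HKB0 andbT sub1set.
set M := mat MM.
have [/andP[IB0 /forallP B0max] B0min] : is_MWB MM (wt MM) B0.
  by apply: Hver; split=> // x; exact: wt_in.
apply/negPn/negP => eB0.
move: HeGS => /setDP[eG _].
move: HB => /andP[/andP[sBG /eqP rBK] _].
have IK : indep M K := indep_sub IB0 HKB0.
rewrite (rank_indep IK) in rBK.
have BK : B :&: K = set0.
  apply/setP=> x; rewrite !inE; apply/negP => /andP[xB xK].
  by have := subsetP sBG x xB; rewrite /minor_ground !inE xK orbT.
have IBK : indep M (B :|: K).
  by apply: rank_card_indep; rewrite rBK cardsU BK cards0 subn0.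
set T := (B :\ e) :|: K.
have eK : e \notin K by move: eG; rewrite /minor_ground !inE negb_or => /andP[].
have eT : e \notin T by rewrite /T !inE eqxx /= eK.
have TeBK : e |: T = B :|: K.
  by apply/setP => x; rewrite /T !inE; case: (eqVneq x e) => [->|] /=; rewrite ?HeB ?orbT.
have IeT : indep M (e |: T) by rewrite TeBK.
have IT : indep M T by apply: indep_sub IeT (subsetUr _ _).
have cT : #|T| = (#|B :\ e| + #|K|)%N.
  rewrite /T cardsU; have -> : (B :\ e) :&: K = set0.
    by apply/eqP; rewrite -subset0 -BK setSI // subD1set.
  by rewrite cards0 subn0.
set S := minor_span M D K (B :\ e).
have HS : forall f, f \in S -> (f \in T) || ~~ indep M (f |: T).
  move=> f; rewrite /S /minor_span inE => /andP[fG /eqP Hr].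
  case fT: (f \in T) => //=; apply/negP => IfT.
  have fB : f \notin B :\ e by apply: contraFN fT; rewrite /T in_setU => ->.
  have HfI : minor_indep M D K (f |: (B :\ e)).
    rewrite /minor_indep subUset sub1set fG (subset_trans (subD1set B e) sBG) /=.
    rewrite -setUA (rank_indep IK) (rank_indep IfT) cardsU1 fT cardsU1 fB cT.
    by rewrite addnA.
  have lo : (#|f |: (B :\ e)| <= minor_rank M D K (f |: (B :\ e)))%N.
    by apply: (leq_bigmax_cond (F := fun Y : {set E} => #|Y|)); rewrite subxx HfI.
  have hi : (minor_rank M D K (B :\ e) <= #|B :\ e|)%N.
    by apply/bigmax_leqP => Y /andP[sY _]; exact: subset_leq_card sY.
  rewrite Hr in lo; move: (leq_trans lo hi); rewrite cardsU1 fB add1n ltnn.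
  by [].
set X := B0 :&: (S :|: K).
have IX : indep M X by apply: indep_sub IB0 (subsetIl _ _).
have IeX : indep M (e |: X).
  apply: (closure_step IT IeT eT IX) => x; rewrite in_setI in_setU.
  move=> /andP[_ /orP[xS|xK]]; first exact: HS.
  by rewrite /T in_setU xK orbT.
pose P := fun Z => [&& indep M Z, e |: X \subset Z & Z \subset e |: B0].
have PX : P (e |: X) by rewrite /P IeX subxx setUS // subsetIl.
have [Z [/and3P[IZ sXZ sZB] Zmax]] := @exists_maxcard _ P (e |: X) PX.
have cZ : (#|B0| <= #|Z|)%N.
  rewrite leqNgt; apply/negP=> lt.
  have [b /setDP[bB bZ] IbZ] := indep_aug IZ IB0 lt.
  have : P (b |: Z).
    by rewrite /P IbZ (subset_trans sXZ (subsetUr _ _)) subUset sub1set in_setU1 bB orbT sZB.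
  by move/Zmax; rewrite cardsU1 bZ add1n ltnn.
have eZ : e \in Z by apply: (subsetP sXZ); rewrite in_setU1 eqxx.
have ZneB : Z != e |: B0.
  have := B0max e; rewrite eB0 /= => nI.
  by apply/negP => /eqP ZE; move: nI; rewrite -ZE IZ.
have /properP[_ [f fin fZ]] : Z \proper e |: B0 by rewrite properEneq ZneB sZB.
have fe : f != e by apply: contraNneq fZ => ->.
have fB0 : f \in B0 by move: fin; rewrite in_setU1 (negbTE fe).
have ZE : Z = e |: (B0 :\ f).
  apply/eqP; rewrite eqEcard; apply/andP; split.
    apply/subsetP => z zZ; have := subsetP sZB z zZ; rewrite !in_setU1 in_setD1.
    have zf : z != f by apply: contraNneq fZ => <-.
    by rewrite zf.
  rewrite cardsU1 in_setD1 (negbTE eB0) andbF /=.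
  by move: cZ; rewrite (cardsD1 f B0) fB0.
have fX : f \notin X by apply: contra fZ => fX; apply: (subsetP sXZ); rewrite in_setU1 fX orbT.
have fGS : f \in minor_ground D K :\: S.
  move: fX; rewrite /X in_setI fB0 /= in_setU negb_or => /andP[fS fK].
  rewrite in_setD fS /minor_ground !inE negb_or fK andbT /=.
  apply/negP => fD; move: HDB0; rewrite disjoint_subset => /subsetP/(_ f fD).
  by rewrite inE fB0.
have Hlt := Hmin f fGS fe.
have Zb : is_basis M Z.
  rewrite /is_basis IZ /=; apply/forallP => g; apply/implyP => gZ.
  apply/negP => IgZ.
  have lt : (#|B0| < #|g |: Z|)%N by rewrite cardsU1 gZ add1n ltnS.
  have [h /setDP[_ hB] IhB] := indep_aug IB0 IgZ lt.
  by have := B0max h; rewrite hB /= IhB.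
have := B0min Z Zb.
rewrite /basis_weight ZE big_setU1 ?in_setD1 ?(negbTE eB0) ?andbF //= (big_setD1 f fB0) /=.
move=> H; rewrite lerD2r in H.
by rewrite ltNge H in Hlt.
Qed.
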